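(* Consider the linearized equation $\mathbf{M}\ddot{\mathbf{x}}+\mathbf{G}\mathbf{x}=\mathbf{B}u$, $\mathbf{x}=[\delta x;\mathbf{x}_q]\in\mathbb{R}^{2n+2}$, $u\in\mathbb{R}^2$, of the chain pendulum on a cart about the equilibrium specified by $s=(s_1,\dots,s_n)\in\{1,-1\}^n$ and $x=0$, with the matrices defined in the context. Suppose that $\mathbf{M}$ is positive-definite. Then this linearized system is controllable if and only if the subsystem \[ \mathbf{M}_{qq}\ddot{\mathbf{x}}_q+\mathbf{G}_{qq}\mathbf{x}_q=\mathbf{M}_{qx}\mathbf{u} \] with control input $\mathbf{u}\in\mathbb{R}^2$ is controllable, or equivalently, if and only if \[ \mathrm{rank}\big[\lambda^2\mathbf{M}_{qq}+\mathbf{G}_{qq},\ \mathbf{M}_{qx}\big]=2n\quad\text{for every }\lambda\in\mathbb{C}. \]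
   Context: Let $n\ge1$, $e_1,e_2,e_3$ the standard basis of $\mathbb{R}^3$ ($e_3$ the direction of gravity), $g>0$, $C=[e_1,e_2]\in\mathbb{R}^{3\times2}$, and $\hat y$ the skew-symmetric matrix with $\hat yz=y\times z$. The system is a cart of mass $m>0$ with planar position $x\in\mathbb{R}^2$, driven by a horizontal force $u\in\mathbb{R}^2$, carrying a serial chain of $n$ links with spherical joints; link $i$ has length $l_i>0$, unit direction $q_i\in\mathsf{S}^2\subset\mathbb{R}^3$, and point mass $m_i>0$ at its outboard end. Define $M_{00}=m+\sum_{i=1}^n m_i$, $M_{0i}=\big(\sum_{a=i}^n m_a\big)l_iC^T\in\mathbb{R}^{2\times3}$, $M_{ij}=\big(\sum_{a=\max\{i,j\}}^n m_a\big)l_il_j$. An equilibrium is given by $q_i=s_ie_3$ with $s_i\in\{1,-1\}$, zero velocities, and $x=0$. Its linearization (with perturbations $x=\epsilon\delta x$, $q_i=\exp(\epsilon\hat\xi_i)s_ie_3$, $\xi_i\cdot e_3=0$, $\mathbf{x}_q=[C^T\xi_1;\dots;C^T\xi_n]\in\mathbb{R}^{2n}$) is $\mathbf{M}\ddot{\mathbf{x}}+\mathbf{G}\mathbf{x}=\mathbf{B}u$ with $\mathbf{M}=\begin{bmatrix}\mathbf{M}_{xx}&\mathbf{M}_{xq}\\\mathbf{M}_{qx}&\mathbf{M}_{qq}\end{bmatrix}$, $\mathbf{G}=\begin{bmatrix}0_2&0\\0&\mathbf{G}_{qq}\end{bmatrix}$, $\mathbf{B}=\begin{bmatrix}I_2\\0_{2n\times2}\end{bmatrix}$,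 where $\mathbf{M}_{xx}=M_{00}I_2$, $\mathbf{M}_{xq}=[-s_1M_{01}\hat e_3C,\dots,-s_nM_{0n}\hat e_3C]\in\mathbb{R}^{2\times2n}$, $\mathbf{M}_{qx}=\mathbf{M}_{xq}^T$, $\mathbf{M}_{qq}$ is the $2n\times2n$ block matrix with $(i,j)$ block $s_is_jM_{ij}I_2$, and $\mathbf{G}_{qq}=\mathrm{diag}\big[s_i\big(\sum_{a=i}^n m_a\big)g\,l_iI_2\big]_{i=1}^n$. Controllability refers to the standard notion for the linear system in first-order form with state $(\mathbf{x},\dot{\mathbf{x}})$. *)

(* Defs.v *)
From HB Require Import structures.
From mathcomp Require Import all_boot all_order all_algebra.
From mathcomp.real_closed Require Import complex.
Set Implicit Arguments. Unset Strict Implicit. Unset Printing Implicit Defensive.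
Import Order.TTheory GRing.Theory Num.Theory.
Local Open Scope ring_scope.

Section Defs.
Variable R : rcfType.

(* standard basis e_1, e_2, e_3 of R^3 (0-indexed: e_(k+1) = ebasis k) *)
Definition ebasis (k : nat) : 'cV[R]_3 := \col_(i < 3) ((i : nat) == k)%:R.
Definition e3 : 'cV[R]_3 := ebasis 2.

(* hat map: hat y *m z = y x z *)
Definition hat (y : 'cV[R]_3) : 'M[R]_3 :=
  let y1 := y (inord 0) 0 in let y2 := y (inord 1) 0 in let y3 := y (inord 2) 0 in
  \matrix_(i < 3, j < 3)
    match (i : nat), (j : nat) with
    | 0, 1 => - y3 | 0, 2 => y2
    | 1, 0 => y3   | 1, 2 => - y1
    | 2, 0 => - y2 | 2, 1 => y1
    | _, _ => 0 end.

Definition Cmat : 'M[R]_(3, 2) := \matrix_(i < 3, j < 2) ((i : nat) == j)%:R.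

(* Links are indexed 0..n-1 (link i of the paper is index i-1 here).
   mass : nat -> R (m_i), len : nat -> R (l_i), s : nat -> R (s_i). *)
Definition mu (n : nat) (mass : nat -> R) (i : nat) : R :=
  \sum_(i <= a < n) mass a.

Definition M00 (n : nat) (m : R) (mass : nat -> R) : R :=
  m + \sum_(0 <= a < n) mass a.

Definition M0i (n : nat) (mass len : nat -> R) (i : nat) : 'M[R]_(2, 3) :=
  (mu n mass i * len i) *: Cmat^T.

Definition Mij (n : nat) (mass len : nat -> R) (i j : nat) : R :=
  mu n mass (maxn i j) * len i * len j.

(* coordinates of x_q in R^(2n): row p belongs to link p %/ 2, component p %% 2 *)
Definition Mxx (n : nat) (m : R) (mass : nat -> R) : 'M[R]_2 :=
  (M00 n m mass)%:M.

Definition Mxq (n : nat) (mass len s : nat -> R) : 'M[R]_(2, 2 * n) :=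
  \matrix_(r < 2, q < 2 * n)
    ((- s (q %/ 2)%N) *: (M0i n mass len (q %/ 2)%N *m hat e3 *m Cmat))
      r (inord (q %% 2)%N).

Definition Mqx (n : nat) (mass len s : nat -> R) : 'M[R]_(2 * n, 2) :=
  (Mxq n mass len s)^T.

Definition Mqq (n : nat) (mass len s : nat -> R) : 'M[R]_(2 * n) :=
  \matrix_(p < 2 * n, q < 2 * n)
    (s (p %/ 2)%N * s (q %/ 2)%N * Mij n mass len (p %/ 2)%N (q %/ 2)%N
      * (((p %% 2)%N == (q %% 2)%N))%:R).

Definition Gqq (n : nat) (mass len s : nat -> R) (g : R) : 'M[R]_(2 * n) :=
  \matrix_(p < 2 * n, q < 2 * n)
    (s (p %/ 2)%N * mu n mass (p %/ 2)%N * g * len (p %/ 2)%N * ((p : nat) == q)%:R).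

Definition Mfull n m mass len s : 'M[R]_(2 + 2 * n) :=
  block_mx (Mxx n m mass) (Mxq n mass len s) (Mqx n mass len s) (Mqq n mass len s).

Definition Gfull n mass len s g : 'M[R]_(2 + 2 * n) :=
  block_mx (0 : 'M_2) 0 0 (Gqq n mass len s g).

Definition Bfull n : 'M[R]_(2 + 2 * n, 2) := col_mx 1%:M 0.

Definition posdef (k : nat) (A : 'M[R]_k) : Prop :=
  A^T = A /\ forall v : 'cV[R]_k, v != 0 -> 0 < (v^T *m A *m v) 0 0.

Definition controllable (k p : nat) (A : 'M[R]_k) (B : 'M[R]_(k, p)) : Prop :=
  \rank (\mxrow_(i < k) (A ^+ i *m B)) = k.

Definition first_order_A (k : nat) (Mm Gm : 'M[R]_k) : 'M[R]_(k + k) :=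
  block_mx 0 1%:M (- (invmx Mm *m Gm)) 0.
Definition first_order_B (k p : nat) (Mm : 'M[R]_k) (Bm : 'M[R]_(k, p))
  : 'M[R]_(k + k, p) := col_mx 0 (invmx Mm *m Bm).

Definition second_order_controllable (k p : nat) (Mm Gm : 'M[R]_k)
  (Bm : 'M[R]_(k, p)) : Prop :=
  controllable (first_order_A Mm Gm) (first_order_B Mm Bm).

Definition toC (k l : nat) (A : 'M[R]_(k, l)) : 'M[R[i]]_(k, l) :=
  map_mx (fun x => (x%:C)%C) A.

End Defs.

(* Main.v *)
Require Import Defs.
From HB Require Import structures.
From mathcomp Require Import all_boot all_order all_algebra.
From mathcomp.real_closed Require Import complex.
Set Implicit Arguments. Unset Strict Implicit. Unset Printing Implicit Defensive.
Import Order.TTheory GRing.Theory Num.Theory.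
Local Open Scope ring_scope.
Lemma kalman_mul (F : fieldType) m k p (A : 'M[F]_k) (B : 'M[F]_(k,p)) (w : 'M_(m,k)) :
  (w *m \mxrow_(i < k) (A ^+ i *m B) = 0) <-> (forall i : 'I_k, w *m A ^+ i *m B = 0).
Proof.
rewrite mul_mxrow -(mxrow0 (q_ := fun _ : 'I_k => p)) -eq_mxrowP.
by split=> H i; [rewrite -mulmxA H | rewrite mulmxA H].
Qed.

Lemma CH_step (F : fieldType) m k p (A : 'M[F]_k) (B : 'M[F]_(k,p)) (w : 'M_(m,k)) :
  (forall i : 'I_k, w *m A ^+ i *m B = 0) -> w *m A ^+ k *m B = 0.
Proof.
case: k A B w => [|k] A B w H; first by rewrite [B]flatmx0 mulmx0.
have CH := Cayley_Hamilton A.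
have sz := size_char_poly A.
have lc : (char_poly A)`_k.+1 = 1.
  by move/monicP: (char_poly_monic A); rewrite lead_coefE sz.
move: CH; rewrite -[char_poly A]coefK sz poly_def big_ord_recr /= lc scale1r rmorphD /=.
rewrite rmorphXn /= horner_mx_X rmorph_sum /=.
move/eqP; rewrite addrC addr_eq0 => /eqP ->.
rewrite mulmxN mulNmx mulmx_sumr mulmx_suml.
rewrite big1 ?oppr0 // => i _.
rewrite linearZ /= rmorphXn /= horner_mx_X.
by rewrite -scalemxAr -scalemxAl H scaler0.
Qed.

Lemma row_free_ker (F : fieldType) m n (M : 'M[F]_(m,n)) :
  row_free M <-> forall w : 'rV_m, w *m M = 0 -> w = 0.
Proof.
split=> [fM w wM|H]; first by apply: (row_free_inj fM); rewrite wM mul0mx.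
rewrite -kermx_eq0; apply/negPn/negP => /rowV0Pn [v].
by rewrite sub_kermx => /eqP /H ->; rewrite eqxx.
Qed.

Lemma pbh (F : closedFieldType) k p (A : 'M[F]_k) (B : 'M[F]_(k,p)) :
  row_free (\mxrow_(i < k) (A ^+ i *m B)) <->
  (forall lam (w : 'rV_k), w *m A = lam *: w -> w *m B = 0 -> w = 0).
Proof.
rewrite row_free_ker; split.
  move=> H lam w wA wB; apply: H; apply/kalman_mul => i.
  have wAi : forall j, w *m A ^+ j = lam ^+ j *: w.
    elim=> [|j IH]; first by rewrite !expr0 mulmx1 scale1r.
    by rewrite !exprSr -mulmxE mulmxA IH -scalemxAl wA scalerA.
  by rewrite wAi -scalemxAl wB scaler0.
move=> H w0 w0K; apply/eqP/negPn/negP => w0nz.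
set K := \mxrow_(i < k) (A ^+ i *m B).
set V := kermx K.
have VK : V *m K = 0 by apply/eqP; rewrite -sub_kermx.
have Vnz : V != 0 by apply/rowV0Pn; exists w0 => //; rewrite sub_kermx w0K.
have stab : (V *m A <= V)%MS.
  rewrite sub_kermx; apply/eqP/kalman_mul => i.
  rewrite -(mulmxA V) mulmxE -exprS.
  have VKi := (kalman_mul _ _ _).1 VK.
  case: (ltnP i.+1 k) => hi; first exact: (VKi (Ordinal hi)).
  have -> : i.+1 = k by apply/eqP; rewrite eqn_leq hi ltn_ord.
  exact: CH_step.
set Vb := row_base V.
have Vbs : (Vb *m A <= Vb)%MS by rewrite (eqmxMr A (eq_row_base V)) !eq_row_base.
set X := Vb *m A *m pinvmx Vb.
have XVb : X *m Vb = Vb *m A by rewrite mulmxKpV.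
have rnz : \rank V != 0%N by rewrite mxrank_eq0.
have [lam] : exists lam, root (char_poly X) lam.
  by apply/closed_rootP; rewrite size_char_poly.
rewrite -eigenvalue_root_char => /eigenvalueP [y yX ynz].
have wnz : y *m Vb != 0.
  apply: contra ynz => /eqP yV; apply/eqP; apply: (row_free_inj (row_base_free V)).
  by rewrite yV mul0mx.
have VbK : Vb *m K = 0 by apply/eqP; rewrite -sub_kermx eq_row_base.
have k0 : (0 < k)%N by apply: leq_trans (rank_leq_col V); rewrite lt0n.
apply/negP: wnz; rewrite negbK; apply/eqP; apply: (H lam).
  by rewrite -mulmxA -XVb mulmxA yX -scalemxAl.
have wK : y *m Vb *m K = 0 by rewrite -mulmxA VbK mulmx0.
have := (kalman_mul _ _ _).1 wK (Ordinal k0).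
by rewrite expr0 mulmx1.
Qed.
Definition PBH2 (F : fieldType) k p (M G : 'M[F]_k) (B : 'M[F]_(k,p)) : Prop :=
  forall lam (z : 'rV_k), z *m (lam ^+ 2 *: M + G) = 0 -> z *m B = 0 -> z = 0.

Lemma fo_null (F : fieldType) k p (Mm Gm : 'M[F]_k) (Bm : 'M[F]_(k,p)) : Mm \in unitmx ->
  (forall lam (w : 'rV_(k + k)),
     w *m block_mx 0 1%:M (- (invmx Mm *m Gm)) 0 = lam *: w ->
     w *m col_mx 0 (invmx Mm *m Bm) = 0 -> w = 0) <-> PBH2 Mm Gm Bm.
Proof.
move=> uM; split.
  move=> H lam z zMG zB.
  set w2 := z *m Mm.
  have hA : row_mx (lam *: w2) w2 *m block_mx 0 1%:M (- (invmx Mm *m Gm)) 0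
            = lam *: row_mx (lam *: w2) w2.
    rewrite mul_row_block !mulmx0 addr0 mulmx1 add0r scale_row_mx; congr row_mx.
    rewrite mulmxN /w2 mulmxA mulmxK // scalerA -expr2; apply/eqP.
    by rewrite eq_sym -addr_eq0 scalemxAr -mulmxDr zMG.
  have hB : row_mx (lam *: w2) w2 *m col_mx 0 (invmx Mm *m Bm) = 0.
    by rewrite mul_row_col mulmx0 add0r /w2 mulmxA mulmxK.
  have := H lam _ hA hB; rewrite -row_mx0 => /eq_row_mx [_ w20].
  by rewrite -(mulmxK uM z) -/w2 w20 mul0mx.
move=> H lam w.
rewrite -[w]hsubmxK mul_row_block mul_row_col !mulmx0 add0r addr0 mulmx1.
rewrite scale_row_mx add0r => /eq_row_mx [e1 e2] wB.
set w1 := lsubmx w in e1 e2 wB *; set w2 := rsubmx w in e1 e2 wB *.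
have e3 : w2 *m invmx Mm *m Gm = - (lam ^+ 2 *: w2).
  by rewrite -mulmxA -[LHS]opprK -mulmxN e1 e2 scalerA -expr2.
have z0 : w2 *m invmx Mm = 0.
  apply: (H lam) => //; last by rewrite -mulmxA.
  by rewrite mulmxDr -scalemxAr mulmxKV // e3 subrr.
have w20 : w2 = 0 by rewrite -(mulmxKV uM w2) z0 mul0mx.
by rewrite e2 w20 scaler0 row_mx0.
Qed.

Lemma full_sub (F : fieldType) k (M00 : 'M[F]_2) (Mxq : 'M[F]_(2,k)) (Mqx : 'M[F]_(k,2))
   (Mqq Gqq : 'M[F]_k) : Gqq \in unitmx ->
  PBH2 (block_mx M00 Mxq Mqx Mqq) (block_mx 0 0 0 Gqq) (col_mx 1%:M 0 : 'M_(2 + k, 2))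
  <-> PBH2 Mqq Gqq Mqx.
Proof.
move=> uG; split.
  move=> H lam z zMG zB.
  have := H lam (row_mx 0 z).
  rewrite scale_block_mx add_block_mx mul_row_block mul_row_col !mul0mx !add0r.
  rewrite mulmx0 zMG addr0 -scalemxAr zB scaler0 row_mx0 => /(_ erefl erefl).
  by rewrite -row_mx0 => /eq_row_mx [].
move=> H lam z.
rewrite -[z]hsubmxK scale_block_mx add_block_mx mul_row_block mul_row_col.
rewrite mulmx1 mulmx0 => e wB; rewrite addr0 in wB.
rewrite wB !mul0mx !add0r in e *.
move: e; rewrite -row_mx0 => /eq_row_mx [e1 e2].
congr row_mx.
rewrite addr0 -scalemxAr in e1.
have [l0|l0] := eqVneq (lam ^+ 2) 0.
  move: e2; rewrite l0 scale0r add0r => zG.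
  by rewrite -(mulmxK uG (rsubmx z)) zG mul0mx.
apply: (H lam _ e2).
by move/eqP: e1; rewrite scaler_eq0 (negbTE l0) => /eqP.
Qed.

Lemma rank_iff (F : fieldType) k p (X : 'M[F]_k) (Y : 'M[F]_(k,p)) :
  \rank (row_mx X Y) = k <-> (forall z : 'rV_k, z *m X = 0 -> z *m Y = 0 -> z = 0).
Proof.
have -> : (\rank (row_mx X Y) = k) <-> row_free (row_mx X Y).
  by rewrite /row_free; split=> [->|/eqP].
rewrite row_free_ker; split=> H z.
  by move=> zX zY; apply: H; rewrite mul_mx_row zX zY row_mx0.
by rewrite mul_mx_row -row_mx0 => /eq_row_mx [zX zY]; apply: H.
Qed.

Lemma map_mxrow (F G: fieldType) (f : {rmorphism F -> G}) k m p (B_ : 'I_k -> 'M[F]_(m,p)) :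
  map_mx f (\mxrow_(i < k) B_ i) = \mxrow_(i < k) map_mx f (B_ i).
Proof. by apply/matrixP => a b; rewrite !mxE. Qed.

Lemma map_mxX (F G: fieldType) (f : {rmorphism F -> G}) k (A : 'M[F]_k) i :
  map_mx f (A ^+ i) = (map_mx f A) ^+ i.
Proof.
elim: i => [|i IH]; first by rewrite !expr0 map_mx1.
by rewrite !exprSr -!mulmxE map_mxM IH.
Qed.

Lemma soc_iff (R : rcfType) k p (Mm Gm : 'M[R]_k) (Bm : 'M[R]_(k,p)) : Mm \in unitmx ->
  second_order_controllable Mm Gm Bm <-> PBH2 (toC Mm) (toC Gm) (toC Bm).
Proof.
move=> uM; rewrite /second_order_controllable /controllable.
set A := first_order_A Mm Gm; set B := first_order_B Mm Bm.
have tC : forall m n (X : 'M[R]_(m,n)), toC X = map_mx (real_complex R) X by [].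
have -> : (\rank (\mxrow_(i < k + k) (A ^+ i *m B)) = (k + k)%N) <->
   row_free (map_mx (real_complex R) (\mxrow_(i < k + k) (A ^+ i *m B))).
  by rewrite row_free_map /row_free; split => [->|/eqP].
rewrite map_mxrow.
rewrite (eq_mxrow (B_ := fun i => map_mx (real_complex R) A ^+ i *m map_mx (real_complex R) B));
  last by move=> i; rewrite map_mxM map_mxX.
rewrite pbh !tC -fo_null ?map_unitmx //.
have -> : map_mx (real_complex R) A =
   block_mx 0 1%:M (- (invmx (map_mx (real_complex R) Mm) *m map_mx (real_complex R) Gm)) 0.
  by rewrite /A /first_order_A map_block_mx !map_mx0 map_mx1 map_mxN map_mxM map_invmx.
have -> : map_mx (real_complex R) B =
   col_mx 0 (invmx (map_mx (real_complex R) Mm) *m map_mx (real_complex R) Bm).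
  by rewrite /B /first_order_B map_col_mx map_mx0 map_mxM map_invmx.
by [].
Qed.

Lemma posdef_unit (R : rcfType) k (M : 'M[R]_k) : posdef M -> M \in unitmx.
Proof.
move=> [_ pd]; rewrite unitmxE unitfE; apply/negP => /det0P [v vnz vM].
have := pd v^T; rewrite trmx_eq0 => /(_ vnz).
by rewrite trmxK vM mul0mx mxE ltxx.
Qed.

Lemma Mqq_unit (R : rcfType) n m (mass len s : nat -> R) :
  posdef (Mfull n m mass len s) -> Mqq n mass len s \in unitmx.
Proof.
move=> [_ pd]; rewrite unitmxE unitfE; apply/negP => /det0P [v vnz vM].
have := pd (row_mx 0 v)^T; rewrite trmx_eq0 -row_mx0.
have -> : (row_mx 0 v == row_mx 0 0 :> 'rV_(2 + 2 * n)) = false.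
  by apply/negbTE; apply: contra vnz => /eqP /eq_row_mx [_ ->].
move=> /(_ isT); rewrite trmxK /Mfull mul_row_block !mul0mx !add0r vM.
by rewrite tr_row_mx mul_row_col trmx0 mulmx0 mul0mx addr0 mxE ltxx.
Qed.

Lemma mu_gt0 (R : rcfType) n (mass : nat -> R) i :
  (forall i, (i < n)%N -> 0 < mass i) -> (i < n)%N -> 0 < mu n mass i.
Proof.
move=> hm hi; rewrite /mu big_ltn //.
apply: ltr_wpDr; last exact: hm.
rewrite big_nat_cond; apply: sumr_ge0 => a /andP[/andP[_ an] _].
exact: ltW (hm a an).
Qed.

Lemma Gqq_unit (R : rcfType) n (g : R) (mass len s : nat -> R) :
  0 < g ->
  (forall i, (i < n)%N -> 0 < mass i) ->
  (forall i, (i < n)%N -> 0 < len i) ->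
  (forall i, (i < n)%N -> s i = 1 \/ s i = -1) ->
  Gqq n mass len s g \in unitmx.
Proof.
move=> hg hm hl hs.
set d := \row_(p < 2 * n) (s (p %/ 2)%N * mu n mass (p %/ 2)%N * g * len (p %/ 2)%N).
have -> : Gqq n mass len s g = diag_mx d.
  by apply/matrixP => p q; rewrite !mxE mulr_natr.
rewrite unitmxE det_diag unitfE; apply/prodf_neq0 => p _.
have hp : (p %/ 2 < n)%N by rewrite ltn_divLR // -[(n * 2)%N]mulnC (ltn_ord p).
rewrite mxE !mulf_neq0 //.
- by case: (hs _ hp) => ->; rewrite ?oppr_eq0 oner_eq0.
- by rewrite gt_eqF // mu_gt0.
- by rewrite gt_eqF.
- by rewrite gt_eqF // hl.
Qed.

Unset Implicit Arguments.
Set Strict Implicit.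

Theorem proposition3 (R : rcfType) (n : nat) (m g : R) (mass len s : nat -> R) :
  (0 < n)%N -> 0 < m -> 0 < g ->
  (forall i, (i < n)%N -> 0 < mass i) ->
  (forall i, (i < n)%N -> 0 < len i) ->
  (forall i, (i < n)%N -> s i = 1 \/ s i = -1) ->
  posdef (Mfull n m mass len s) ->
  (second_order_controllable (Mfull n m mass len s) (Gfull n mass len s g) (Bfull R n)
     <-> second_order_controllable (Mqq n mass len s) (Gqq n mass len s g)
                                   (Mqx n mass len s))
  /\
  (second_order_controllable (Mqq n mass len s) (Gqq n mass len s g) (Mqx n mass len s)
     <-> forall lam : R[i],
       \rank (row_mx (lam ^+ 2 *: toC (Mqq n mass len s) + toC (Gqq n mass len s g))
                     (toC (Mqx n mass len s))) = (2 * n)%N).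
Proof.
move=> hn hm0 hg hm hl hs hP.
have uF := posdef_unit hP.
have uQ := Mqq_unit hP.
have uG := Gqq_unit hg hm hl hs.
have tC : forall a b (X : 'M[R]_(a,b)), toC X = map_mx (real_complex R) X by [].
split.
  rewrite (soc_iff _ _ uF) (soc_iff _ _ uQ).
  have -> : toC (Mfull n m mass len s) = block_mx (toC (Mxx n m mass))
     (toC (Mxq n mass len s)) (toC (Mqx n mass len s)) (toC (Mqq n mass len s)).
    by rewrite !tC /Mfull map_block_mx.
  have -> : toC (Gfull n mass len s g) = block_mx 0 0 0 (toC (Gqq n mass len s g)).
    by rewrite !tC /Gfull map_block_mx !map_mx0.
  have -> : toC (Bfull R n) = col_mx 1%:M 0.
    by rewrite !tC /Bfull map_col_mx map_mx1 map_mx0.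
  by apply: full_sub; rewrite tC map_unitmx.
rewrite (soc_iff _ _ uQ); split => H lam.
  by apply/rank_iff => z zX zY; apply: (H lam).
by move=> z zX zY; apply: ((rank_iff _ _).1 (H lam)).
Qed.
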